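(* Let $I=(\mathcal{M},[N],(u_i)_{i\in[N]})$ be a non-negative instance with $\mathcal{M}\ne\emptyset$ and let $(S_1,\ldots,S_N)$ be the allocation produced by the round-robin greedy protocol for $I$. Then for all $i\in[N]$, $$u_i(S_i)\le\Big(2-\frac1N\Big)\cdot mMS_{u_i}^N(\mathcal{M}).$$ Moreover the constant $2-\frac1N$ cannot be improved: for every $N\ge1$ there is a non-negative instance with $N$ agents for which the protocol yields an agent $i$ with $u_i(S_i)=\big(2-\frac1N\big)\,mMS_{u_i}^N(\mathcal{M})>0$.
   Context: A non-negative instance: finite item set $\mathcal{M}$, agents $[N]=\{1,\dots,N\}$, additive utilities $u_i$ with $u_i(j)\ge0$. $\Pi_N(\mathcal{M})$ is the set of ordered $N$-partitions of $\mathcal{M}$ (parts may be empty); $mMS_{u}^N(\mathcal{M}):=\min_{(T_1,\ldots,T_N)\in\Pi_N(\mathcal{M})}\max_{j} u(T_j)$. The round-robin greedy protocol: agents pick in the fixed order $1,2,\dots,N,1,2,\dots$; at her turn agent $i$ receives an item of lowest utility $u_i$ among the unallocated items (ties broken arbitrarily), until all items are allocated; $S_i$ is the set agent $i$ receives. *)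

(* Defs.v *)
From HB Require Import structures.
From mathcomp Require Import all_boot all_order all_algebra.
Set Implicit Arguments. Unset Strict Implicit. Unset Printing Implicit Defensive.
Import Order.TTheory GRing.Theory Num.Theory.
Local Open Scope ring_scope.

Definition util (R : realFieldType) (T : finType) (v : T -> R) (A : {set T}) : R :=
  \sum_(x in A) v x.

(* An ordered N-partition (parts may be empty) is encoded by the assignment
   f : T -> 'I_N, with parts T_j = [set x | f x == j]. *)
Definition part_cost (R : realFieldType) (T : finType) (N : nat)
    (v : T -> R) (f : {ffun T -> 'I_N}) : R :=
  \big[Num.max/0]_(j < N) util v [set x | f x == j].

(* The default value util v setT is attained by the partition putting all
   items in one part (when N >= 1), and is an upper bound of all part costs
   for non-negative v, so this is the true minimum in that setting. *)
Definition mMS (R : realFieldType) (T : finType) (v : T -> R) (N : nat) : R :=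
  \big[Num.min/util v setT]_(f : {ffun T -> 'I_N}) part_cost v f.

(* A run of the round-robin greedy protocol (with arbitrary tie-breaking)
   is recorded as the sequence s of items in the order they are picked:
   s lists every item exactly once, and the k-th pick (0-based) is made by
   agent k %% N (0-based), who receives an item of lowest utility among the
   still unallocated items (those at positions >= k). *)
Definition rr_exec (R : realFieldType) (T : finType) (N : nat)
    (u : 'I_N -> T -> R) (s : seq T) : Prop :=
  perm_eq s (enum T) /\
  forall (i : 'I_N) (k : nat) (x : T) (rest : seq T),
    drop k s = x :: rest -> (k %% N)%N = i ->
    forall y, y \in rest -> u i x <= u i y.

Definition rr_bundle (T : finType) (N : nat) (s : seq T) (i : 'I_N) : {set T} :=
  [set x | ((index x s) %% N == i)%N].

(* Main.v *)
Require Import Defs.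
From HB Require Import structures.
From mathcomp Require Import all_boot all_order all_algebra.
From mathcomp Require Import zify ring lra.
Import Order.TTheory GRing.Theory Num.Theory.
Local Open Scope ring_scope.

Section S.
Variable R : realFieldType.

Lemma sum_filt_small (N i n : nat) (F : nat -> R) : (n <= N)%N ->
  \sum_(0 <= k < n | (k %% N == i)%N) F k = if (i < n)%N then F i else 0.
Proof.
elim: n => [|n IH] Hn; first by rewrite big_geq.
rewrite big_mkcond big_nat_recr //= -big_mkcond IH ?(ltnW Hn) //.
rewrite modn_small //.
case: (ltngtP i n) => H /=.
- have -> : (i < n.+1)%N by lia.
  by rewrite addr0.
- have -> : (i < n.+1)%N = false by lia.
  by rewrite addr0.
- subst; have -> : (n < n.+1)%N by lia.
  by rewrite add0r.
Qed.

Lemma key0 (N : nat) (a : R) : (0 < N)%N -> 0 <= a -> forall m (F : nat -> R),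
  (forall k, (k < m)%N -> 0 <= F k <= a) ->
  (forall k l, (k %% N == 0)%N -> (k < l)%N -> (l < m)%N -> F k <= F l) ->
  N%:R * \sum_(0 <= k < m | (k %% N == 0)%N) F k
    <= \sum_(0 <= k < m) F k + (N.-1)%:R * a.
Proof.
move=> N0 a0 m; elim/ltn_ind: m => m IH F Hb Hm.
have NN : N%:R = 1 + (N.-1)%:R :> R by rewrite -{1}(prednK N0) -addn1 natrD addrC.
have sum0 : forall n, 0 <= \sum_(0 <= k < n | (k < m)%N) F k.
  by move=> n; apply: sumr_ge0 => k /Hb /andP[].
case: (leqP m N) => HmN.
  rewrite sum_filt_small //.
  case: ifP => H0; last first.
    rewrite mulr0 addr_ge0 //; last by rewrite mulr_ge0.
    by rewrite big_nat_cond; apply: sumr_ge0 => k /andP[/andP[_ /Hb /andP[]]].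
  rewrite NN mulrDl mul1r lerD //.
    by rewrite big_ltn // ler_wpDr // big_nat_cond; apply: sumr_ge0 => k /andP[/andP[_ /Hb /andP[]]].
  by rewrite ler_wpM2l // ?ler0n //; case/andP: (Hb 0%N H0).
rewrite [X in _ <= X + _](big_cat_nat _ (n := N)) //= ?(ltnW HmN) //.
rewrite [X in _ * X <= _](big_cat_nat _ (n := N)) //= ?(ltnW HmN) //.
rewrite sum_filt_small // N0.
have sh1 : \sum_(N <= i < m | (i %% N)%N == 0%N) F i =
   \sum_(0 <= k < m - N | (k %% N)%N == 0%N) F (k + N)%N.
  rewrite -{1}(add0n N) big_addn.
  by apply: eq_bigl => k; rewrite modnDr.
have sh2 : \sum_(N <= i < m) F i = \sum_(0 <= k < m - N) F (k + N)%N.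
  by rewrite -{1}(add0n N) big_addn.
rewrite sh1 sh2.
have IH' := IH (m - N)%N _ (fun k => F (k + N)%N).
have := IH' ltac:(lia).
move=> /(_ _ _) H.
have {}H := H _ _.

rewrite mulrDr -[X in _ <= X]addrA.
apply: lerD; last first.
  apply: H.
  - move=> k Hk; apply: Hb; lia.
  - move=> k l Hk Hkl Hl; apply: Hm; rewrite ?modnDr //; lia.
have -> : N%:R * F 0%N = \sum_(0 <= k < N) F 0%N.
  by rewrite sumr_const_nat subn0 mulr_natl.
apply: ler_sum_nat => k Hk.
case: k Hk => // k Hk.
apply: Hm; rewrite ?mod0n //; lia.
Qed.


Lemma modi (N i k : nat) : (i < N)%N -> ((k + i) %% N == i)%N = (k %% N == 0)%N.
Proof.
move=> Hi.
have N0 : (0 < N)%N by lia.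
have Hr := ltn_pmod k N0.
have -> : ((k + i) %% N = (k %% N + i) %% N)%N by rewrite modnDml.
move: (k %% N)%N Hr => r Hr.
case: (ltnP (r + i) N) => H.
  rewrite modn_small //; apply/eqP/eqP; lia.
have -> : (r + i = (r + i - N) + N)%N by lia.
rewrite modnDr modn_small; last by lia.
apply/eqP/eqP; lia.
Qed.

Lemma keyi (N i : nat) (a : R) : (0 < N)%N -> (i < N)%N -> 0 <= a -> forall m (F : nat -> R),
  (forall k, (k < m)%N -> 0 <= F k <= a) ->
  (forall k l, (k %% N == i)%N -> (k < l)%N -> (l < m)%N -> F k <= F l) ->
  N%:R * \sum_(0 <= k < m | (k %% N == i)%N) F k
    <= \sum_(0 <= k < m) F k + (N.-1)%:R * a.
Proof.
move=> N0 Hi a0 m F Hb Hm.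
have Fge0 : 0 <= \sum_(0 <= k < m) F k.
  by rewrite big_nat_cond; apply: sumr_ge0 => k /andP[/andP[_ /Hb /andP[]]].
case: (leqP m i) => Hmi.
  rewrite sum_filt_small; last by lia.
  have -> : (i < m)%N = false by lia.
  by rewrite mulr0 addr_ge0 // mulr_ge0.
rewrite (big_cat_nat _ (n := i)) //= ?(ltnW Hmi) //.
rewrite sum_filt_small; last by lia.
rewrite ltnn add0r.
rewrite -{1}(add0n i) big_addn.
under eq_bigl => k do rewrite modi //.
have K := key0 N a N0 a0 (m - i) (fun k => F (k + i)%N).
have {}K := K ltac:(move=> k Hk; apply: Hb; lia).
have {}K := K ltac:(move=> k l Hk Hkl Hl; apply: Hm; rewrite ?modi //; lia).
apply: le_trans K _.
rewrite lerD2r (big_cat_nat _ (n := i) (p := m)) //= ?(ltnW Hmi) //.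
have -> : \sum_(i <= k < m) F k = \sum_(0 <= k < m - i) F (k + i)%N.
  by rewrite -{1}(add0n i) big_addn.
rewrite ler_wpDl //.
by rewrite big_nat_cond; apply: sumr_ge0 => k /andP[/andP[_ Hk] _]; case/andP: (Hb k (ltn_trans Hk Hmi)).
Qed.

Lemma le_bigmax_seq (I : eqType) (F : I -> R) (r : seq I) j : j \in r ->
  F j <= \big[Num.max/0]_(k <- r) F k.
Proof.
elim: r => // x r IH; rewrite inE big_cons => /orP[/eqP->|/IH H].
  by rewrite le_max lexx.
by rewrite le_max H orbT.
Qed.

Lemma bigmin_le_seq (I : eqType) (F : I -> R) c (r : seq I) j : j \in r ->
  \big[Num.min/c]_(k <- r) F k <= F j.
Proof.
elim: r => // x r IH; rewrite inE big_cons => /orP[/eqP->|/IH H].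
  by rewrite ge_min lexx.
by rewrite ge_min H orbT.
Qed.

Lemma mMS_le (T : finType) (v : T -> R) N (f : {ffun T -> 'I_N}) : mMS v N <= part_cost v f.
Proof. by rewrite /mMS; apply: bigmin_le_seq; rewrite mem_index_enum. Qed.

Lemma mMS_ge (T : finType) (v : T -> R) N c :
  c <= util v setT -> (forall f : {ffun T -> 'I_N}, c <= part_cost v f) -> c <= mMS v N.
Proof.
move=> H1 H2; rewrite /mMS; apply: (big_ind (fun y => c <= y)) => //.
by move=> x y Hx Hy; rewrite le_min Hx Hy.
Qed.

Lemma item_le (T : finType) (v : T -> R) N (f : {ffun T -> 'I_N}) x :
  (forall y, 0 <= v y) -> v x <= part_cost v f.
Proof.
move=> v0; rewrite /part_cost; apply: le_trans (le_bigmax_seq _ (fun j => util v [set y | f y == j]) _ _ (mem_index_enum (f x))).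
rewrite /util (bigD1 x) ?inE //= ler_wpDr //.
by apply: sumr_ge0 => y _; apply: v0.
Qed.

Lemma total_le (T : finType) (v : T -> R) N (f : {ffun T -> 'I_N}) :
  util v setT <= N%:R * part_cost v f.
Proof.
rewrite /util (partition_big f xpredT) //=.
have -> : N%:R * part_cost v f = \sum_(j < N) part_cost v f.
  by rewrite sumr_const card_ord mulr_natl.
apply: ler_sum => j _.
rewrite /part_cost; apply: le_trans (le_bigmax_seq _ (fun j => util v [set y | f y == j]) _ _ (mem_index_enum j)).
rewrite /util le_eqVlt; apply/orP; left; apply/eqP; apply: eq_bigl => y; by rewrite !inE.
Qed.

Lemma item_le_sum (T : finType) (v : T -> R) x :
  (forall y, 0 <= v y) -> v x <= util v setT.
Proof.
move=> v0; rewrite /util (bigD1 x) ?inE //= ler_wpDr //.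
by apply: sumr_ge0 => y _; apply: v0.
Qed.
End S.

Lemma part1 (R : realFieldType) (T : finType) (N : nat) (u : 'I_N -> T -> R) (s : seq T) :
      (0 < N)%N -> (0 < #|T|)%N ->
      (forall i x, 0 <= u i x) ->
      rr_exec u s ->
      forall i : 'I_N,
        util (u i) (rr_bundle s i) <= (2 - N%:R^-1) * mMS (u i) N.
Proof.
move=> N0 T0 u0 [Hp Hr] i.
set v := u i; set K := mMS v N.
have v0 : forall x, 0 <= v x by move=> x; apply: u0.
have vK : forall x, v x <= K.
  move=> x; apply: mMS_ge; first exact: item_le_sum.
  by move=> f; apply: item_le.
have n0 : 0 < N%:R :> R by rewrite ltr0n.
have UK : util v setT <= K * N%:R.
  rewrite -ler_pdivrMr //; apply: mMS_ge.
    rewrite ler_pdivrMr // ler_peMr //; last by rewrite ler1n.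
    by rewrite /util; apply: sumr_ge0.
  by move=> f; rewrite ler_pdivrMr // mulrC; apply: total_le.
case/card_gt0P: T0 => x0 _.
have K0 : 0 <= K by apply: le_trans (vK x0).
have Us : uniq s by rewrite (perm_uniq Hp) enum_uniq.
have Hpi : perm_eq s (index_enum T).
  apply: uniq_perm => //; first exact: index_enum_uniq.
  by move=> x; rewrite (perm_mem Hp) mem_enum mem_index_enum.
have E1 : util v (rr_bundle s i) = \sum_(0 <= k < size s | (k %% N == i)%N) v (nth x0 s k).
  rewrite /util /rr_bundle.
  rewrite (eq_bigl (fun x => (index x s %% N == i)%N)) => [|x]; last by rewrite inE.
  rewrite -(perm_big _ Hpi) (big_nth x0) big_nat_cond [RHS]big_nat_cond.
  apply: eq_bigl => k; case/boolP: (k < size s)%N => Hk; last by rewrite !andbF.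
  by rewrite index_uniq.
have E2 : util v setT = \sum_(0 <= k < size s) v (nth x0 s k).
  rewrite /util.
  rewrite (eq_bigl xpredT) => [|x]; last by rewrite inE.
  by rewrite -(perm_big _ Hpi) (big_nth x0).
have key := @keyi R N i K N0 (ltn_ord i) K0 (size s) (fun k => v (nth x0 s k)).
have bnd : forall k, (k < size s)%N -> 0 <= v (nth x0 s k) <= K.
  by move=> k _; rewrite v0 vK.
have {}key := key bnd.
have mono : forall k l : nat, (k %% N)%N == i -> (k < l)%N -> (l < size s)%N ->
    v (nth x0 s k) <= v (nth x0 s l).
  move=> k l Hki Hkl Hl.
  apply: (Hr i k (nth x0 s k) (drop k.+1 s)).
  - by rewrite (drop_nth x0) //; apply: ltn_trans Hl.
  - by apply/eqP.
  - rewrite -(subnKC Hkl) -nth_drop; apply: mem_nth; rewrite size_drop; apply: ltn_sub2r; [exact: leq_ltn_trans Hkl Hl | exact: Hl].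
have {}key := key mono.
rewrite -E1 -E2 in key.
have Hn1 : (N.-1)%:R = N%:R - 1 :> R by rewrite -[in RHS](prednK N0) -addn1 natrD addrK.
rewrite Hn1 in key.
rewrite -(ler_pM2l n0) mulrA mulrBr mulfV; last by rewrite gt_eqF.
move: key UK K0 n0.
set U := util v _; set A := util v _; set n := N%:R.
move=> key UK K0 n0.
nra.
Qed.

Lemma part2 (R : realFieldType) (N : nat) : (0 < N)%N ->
     exists (T : finType) (u : 'I_N -> T -> R) (s : seq T) (i : 'I_N),
       [/\ (forall j x, 0 <= u j x),
           rr_exec u s,
           util (u i) (rr_bundle s i) = (2 - N%:R^-1) * mMS (u i) N
         & 0 < mMS (u i) N].
Proof.
case: N => // M _.
set n0 := (M.+1 * M)%N.
pose v := fun x : 'I_n0.+1 => if x == ord_max then M.+1%:R else 1 : R.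
exists ('I_n0.+1 : finType), (fun _ => v), (enum 'I_n0.+1), ord0.
have v0 : forall x, 0 <= v x by move=> x; rewrite /v; case: ifP.
have v1 : forall x, 1 <= v x by move=> x; rewrite /v; case: ifP; rewrite // ler1n.
have rr : rr_exec (fun _ : 'I_M.+1 => v) (enum 'I_n0.+1).
  split; first exact: perm_refl.
  move=> j k x rest Hd _ y Hy.
  have Hk : (k < n0.+1)%N.
    case: (ltnP k n0.+1) => // H.
    by rewrite drop_oversize // size_enum_ord in Hd.
  rewrite (drop_nth ord0) ?size_enum_ord // in Hd.
  case: Hd => Hx Hrest; subst x rest.
  rewrite {1}/v; case: eqP => Hx; last by apply: v1.
  have : (nth ord0 (enum 'I_n0.+1) k : nat) = n0 by rewrite Hx.
  rewrite nth_enum_ord // => Hkn; subst k.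
  by rewrite drop_oversize ?size_enum_ord // in Hy.
have mge : M.+1%:R <= mMS v M.+1.
  apply: mMS_ge; first by have := @item_le_sum R _ v ord_max v0; rewrite /v eqxx.
  by move=> f; have := @item_le R _ v _ f ord_max v0; rewrite /v eqxx.
pose f := [ffun x : 'I_n0.+1 => (inord (x %/ M.+1) : 'I_M.+1)].
have fv : forall x : 'I_n0.+1, (f x : nat) = (x %/ M.+1)%N.
  move=> x; rewrite ffunE inordK // ltnS.
  have Hx : (x <= n0)%N by rewrite -ltnS.
  by apply: leq_trans (leq_div2r M.+1 Hx) _; rewrite /n0 mulKn.
have mle : mMS v M.+1 <= M.+1%:R.
  apply: le_trans (@mMS_le R _ v _ f) _.
  rewrite /part_cost; apply: (big_ind (fun y => y <= M.+1%:R)) => //.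
    by move=> x y Hx Hy; rewrite ge_max Hx Hy.
  move=> j _.
  case/boolP: (f ord_max == j) => Hj.
    have -> : [set x | f x == j] = [set ord_max].
      apply/setP => x; rewrite !inE; apply/idP/idP => [Hx|/eqP->//].
      apply/eqP/val_inj => /=.
      move: Hx; rewrite -(eqP Hj) => /eqP Hx.
      have H2 := congr1 (@nat_of_ord M.+1) Hx; rewrite !fv /= in H2.
      have E : (n0 %/ M.+1 = M)%N by rewrite /n0 mulKn.
      have Hx1 : (x <= n0)%N by rewrite -ltnS.
      move: (nat_of_ord x) Hx1 H2 => y Hy1; rewrite E => Hy2.
      apply/eqP; rewrite eqn_leq Hy1 /=.
      by rewrite /n0 mulnC -{1}Hy2 leq_trunc_div.
    by rewrite /util big_set1 /v eqxx.
  rewrite /util (eq_bigr (fun _ => 1)); last first.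
    move=> x; rewrite inE => /eqP Hx; rewrite /v; case: eqP => // Ex.
    by move: Hj; rewrite -Hx Ex eqxx.
  rewrite sumr_const ler_nat.
  apply: leq_trans (_ : _ <= #|'I_M.+1|)%N _; last by rewrite card_ord.
  apply: (@leq_card_in _ _ (fun x : 'I_n0.+1 => (inord (x %% M.+1) : 'I_M.+1))).
  move=> x y; rewrite !inE => /eqP Hx /eqP Hy /(congr1 val) /=.
  rewrite !inordK ?ltn_pmod // => Hm.
  apply: val_inj => /=.
  rewrite (divn_eq x M.+1) (divn_eq y M.+1) Hm -!fv Hx Hy //.
have mEq : mMS v M.+1 = M.+1%:R by apply/le_anti; rewrite mle mge.
have le := @part1 R _ M.+1 (fun _ => v) _ (ltn0Sn M) ltac:(by rewrite card_ord) (fun _ x => v0 x) rr ord0.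
pose h := fun k : 'I_M.+1 => (inord (k * M.+1) : 'I_n0.+1).
have hv : forall k : 'I_M.+1, (h k : nat) = (k * M.+1)%N.
  move=> k; rewrite inordK // ltnS /n0 [(M.+1 * M)%N]mulnC leq_mul2r.
  by rewrite -ltnS ltn_ord orbT.
have hinj : {in [set: 'I_M.+1] &, injective h}.
  move=> a b _ _ /(congr1 (@nat_of_ord _)); rewrite !hv => /eqP.
  by rewrite eqn_mul2r /= => /eqP /val_inj.
have sub : forall k, h k \in rr_bundle (enum 'I_n0.+1) (@ord0 M).
  by move=> k; rewrite /rr_bundle inE index_enum_ord hv modnMl.
have sub2 : (h @: [set: 'I_M.+1]) \subset rr_bundle (enum 'I_n0.+1) (@ord0 M).
  by apply/subsetP => y /imsetP [k _ ->]; apply: sub.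
have ge : (2 - M.+1%:R^-1) * M.+1%:R <= util v (rr_bundle (enum 'I_n0.+1) (@ord0 M)).
  rewrite /util (big_setID (h @: [set: 'I_M.+1])) /= (setIidPr sub2).
  apply: ler_wpDr; first by apply: sumr_ge0 => x _; apply: v0.
  rewrite big_imset //=.
  rewrite (eq_bigl xpredT) => [|k]; last by rewrite inE.
  rewrite big_ord_recr /=.
  have -> : h ord_max = ord_max by apply: val_inj; rewrite /= hv /= /n0 mulnC.
  rewrite (eq_bigr (fun _ => 1)); last first.
    move=> k _; rewrite /v; case: eqP => // /(congr1 (@nat_of_ord _)).
    rewrite hv /= /n0 mulnC => /eqP; rewrite eqn_mul2l /= => /eqP Hk.
    by have := ltn_ord k; rewrite Hk ltnn.
  rewrite sumr_const card_ord /v eqxx.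
  have n0' : M.+1%:R != 0 :> R by rewrite pnatr_eq0.
  rewrite mulrBl mulVf // -natrD.
  rewrite natrD -!natr1; lra.
split.
- by move=> _ x; apply: v0.
- exact: rr.
- apply/le_anti; rewrite le /=; rewrite mEq; exact: ge.
- by rewrite mEq ltr0Sn.
Qed.

Theorem proposition6 (R : realFieldType) :
  (forall (T : finType) (N : nat) (u : 'I_N -> T -> R) (s : seq T),
      (0 < N)%N -> (0 < #|T|)%N ->
      (forall i x, 0 <= u i x) ->
      rr_exec u s ->
      forall i : 'I_N,
        util (u i) (rr_bundle s i) <= (2 - N%:R^-1) * mMS (u i) N)
  /\
  (forall N : nat, (0 < N)%N ->
     exists (T : finType) (u : 'I_N -> T -> R) (s : seq T) (i : 'I_N),
       [/\ (forall j x, 0 <= u j x),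
           rr_exec u s,
           util (u i) (rr_bundle s i) = (2 - N%:R^-1) * mMS (u i) N
         & 0 < mMS (u i) N]).
Proof.
split; first exact: part1.
exact: part2.
Qed.
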